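(* Let $G$ be a finite simple graph. Then the independence complex $\Delta(G)$ is sortable if and only if $G$ is a proper interval graph.
   Context: The independence complex $\Delta(G)$ is the simplicial complex of all independent sets of $G$. For finite $F,G\subset\mathbb{N}$ with $|F|=r,|G|=s$, write $\mathbf{x}^F\mathbf{x}^G=x_{i_1}\cdots x_{i_{r+s}}$ with $i_1\le\cdots\le i_{r+s}$ (where $\mathbf{x}^F=\prod_{i\in F}x_i$) and set $\mathrm{sort}(F,G)=(\{i_k:k\text{ odd}\},\{i_k:k\text{ even}\})$. A simplicial complex $\Delta$ with $V(\Delta)\subset\mathbb{N}$ is sortable with respect to the given labeling if $\mathrm{sort}(F,G)\in\Delta\times\Delta$ for all $F,G\in\Delta$; $\Delta$ is sortable if it is sortable with respect to some labeling of its vertices by distinct integers. A proper interval graph is a graph whose vertices can be assigned real intervals, none properly containing another, such that two vertices are adjacent iff their intervals intersect. *)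

(* Defs.v *)
From mathcomp Require Import all_boot.
From Stdlib Require Import Rdefinitions.

Set Implicit Arguments.
Unset Strict Implicit.
Unset Printing Implicit Defensive.

(* A finite simple graph is a symmetric irreflexive relation e on a finType V. *)

Definition independent (V : finType) (e : rel V) (F : {set V}) : bool :=
  [forall u in F, forall v in F, ~~ e u v].

(* For a labeling f of the vertices by naturals, the sorted sequence
   i_1 <= ... <= i_{r+s} of the monomial x^F x^G (labels of F and of G,
   with repetition). *)
Definition merged_labels (V : finType) (f : V -> nat) (F G : {set V}) : seq nat :=
  sort leq (map f (enum F) ++ map f (enum G)).

(* Labels at odd (1-indexed) positions, i.e. even 0-indexed positions. *)
Definition odd_part (s : seq nat) : seq nat :=
  [seq nth 0 s i | i <- iota 0 (size s) & ~~ odd i].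
(* Labels at even (1-indexed) positions. *)
Definition even_part (s : seq nat) : seq nat :=
  [seq nth 0 s i | i <- iota 0 (size s) & odd i].

(* sort(F,G) = (sort1, sort2), pulled back along the labeling f as vertex sets. *)
Definition sort1 (V : finType) (f : V -> nat) (F G : {set V}) : {set V} :=
  [set v | f v \in odd_part (merged_labels f F G)].
Definition sort2 (V : finType) (f : V -> nat) (F G : {set V}) : {set V} :=
  [set v | f v \in even_part (merged_labels f F G)].

Definition sortable_wrt (V : finType) (e : rel V) (f : V -> nat) : Prop :=
  forall F G : {set V}, independent e F -> independent e G ->
    independent e (sort1 f F G) /\ independent e (sort2 f F G).

Definition ind_complex_sortable (V : finType) (e : rel V) : Prop :=
  exists f : V -> nat, injective f /\ sortable_wrt e f.

Definition proper_interval_graph (V : finType) (e : rel V) : Prop :=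
  exists l r : V -> R,
    (forall v, Rle (l v) (r v)) /\
    (forall u v : V, u <> v ->
        ~ (Rle (l v) (l u) /\ Rle (r u) (r v) /\ (l u <> l v \/ r u <> r v))) /\
    (forall u v : V, u <> v ->
        (e u v <-> (Rle (l u) (r v) /\ Rle (l v) (r u)))).

(* Main.v *)
Require Import Defs.
From mathcomp Require Import all_boot.
From mathcomp Require Import zify.

Set Implicit Arguments.
Unset Strict Implicit.
Unset Printing Implicit Defensive.

Section Comb.
Variables (V : finType) (e : rel V) (f : V -> nat).
Hypotheses (e_sym : symmetric e) (e_irr : irreflexive e) (f_inj : injective f).

Definition umbrella := forall x y z, f x < f y -> f y < f z -> e x z -> e x y && e y z.

Lemma indepP (F : {set V}) : independent e F ->
  forall x y, x \in F -> y \in F -> ~~ e x y.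
Proof. by move=> /forall_inP H x y xF yF; have /forall_inP := H x xF; apply. Qed.

Lemma indepI (F : {set V}) : (forall x y, x \in F -> y \in F -> ~~ e x y) -> independent e F.
Proof. by move=> H; apply/forall_inP => x xF; apply/forall_inP => y yF; apply: H. Qed.

Lemma clique (U : umbrella) u v x y : e u v -> f u < f v ->
  f u <= f x <= f v -> f u <= f y <= f v -> x != y -> e x y.
Proof.
move=> euv luv /andP[hx1 hx2] /andP[hy1 hy2] nxy.
wlog lxy : x y hx1 hx2 hy1 hy2 nxy / f x < f y.
  move=> W. have : f x != f y by apply: contra nxy => /eqP /f_inj ->.
  rewrite neq_ltn => /orP[h|h]; first exact: W.
  rewrite e_sym; apply: W => //; by rewrite eq_sym.
have [ex|nx] := eqVneq (f x) (f u).
- have -> : x = u by apply: f_inj.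
  have [ey|ny] := eqVneq (f y) (f v).
  + by have -> : y = v by apply: f_inj.
  + have lyv : f y < f v by rewrite ltn_neqAle ny.
    have luy : f u < f y by lia.
    by case/andP: (U _ _ _ luy lyv euv).
- have lux : f u < f x by rewrite ltn_neqAle eq_sym nx.
  have lxv : f x < f v by lia.
  have /andP[_ exv] := U _ _ _ lux lxv euv.
  have [ey|ny] := eqVneq (f y) (f v).
  + by have -> : y = v by apply: f_inj.
  + have lyv : f y < f v by rewrite ltn_neqAle ny.
    by case/andP: (U _ _ _ lxy lyv exv).
Qed.

Lemma count_le1 (F : {set V}) (P : pred V) : independent e F ->
  (forall x y, P x -> P y -> x != y -> e x y) -> count P (enum F) <= 1.
Proof.
move=> iF HP. rewrite -size_filter.
have : uniq (filter P (enum F)) by rewrite filter_uniq ?enum_uniq.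
have : forall x, x \in filter P (enum F) -> (x \in F) && P x.
  by move=> x; rewrite mem_filter mem_enum andbC.
case: (filter P (enum F)) => [|x [|y t]] //= Hm /andP[nx _].
have /andP[xF Px] := Hm x (mem_head _ _).
have /andP[yF Py] : (y \in F) && P y by apply: Hm; rewrite !inE eqxx orbT.
have nxy : x != y by apply: contra nx => /eqP ->; rewrite mem_head.
by have := indepP iF xF yF; rewrite (HP x y Px Py nxy).
Qed.

Lemma merge_ok (U : umbrella) (F G : {set V}) : independent e F -> independent e G ->
  forall u v p q, p < size (merged_labels f F G) -> q < size (merged_labels f F G) ->
  odd p = odd q -> nth 0 (merged_labels f F G) p = f u ->
  nth 0 (merged_labels f F G) q = f v -> f u < f v -> ~~ e u v.
Proof.
move=> iF iG u v p q; set s := merged_labels f F G => hp hq hpq hsp hsq luv.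
apply/negP => euv.
have ss : sorted leq s by apply: sort_sorted; exact: leq_total.
have mono : forall i j, i < size s -> j < size s -> i <= j -> nth 0 s i <= nth 0 s j.
  by move=> i j hi hj hij; apply: (sorted_leq_nth leq_trans leqnn 0 ss).
have lpq : p < q.
  rewrite ltnNge; apply/negP => hqp.
  by have := mono _ _ hq hp hqp; rewrite hsp hsq; lia.
have lp1q : p.+1 < q.
  rewrite ltn_neqAle lpq andbT; apply/eqP => E.
  by move: hpq; rewrite -E /=; case: (odd p).
pose P := fun x => (f u <= x) && (x <= f v).
have c3 : 3 <= count P s.
  have -> : s = take p s ++ drop p s by rewrite cat_take_drop.
  rewrite count_cat (drop_nth 0 (ltn_trans lpq hq)) (drop_nth 0 (ltn_trans lp1q hq)).
  have h1 : P (nth 0 s p) by rewrite /P hsp leqnn; lia.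
  have h2 : P (nth 0 s p.+1).
    rewrite /P -hsp -hsq !mono //; try lia.
  have h3 : 0 < count P (drop p.+2 s).
    rewrite -has_count; apply/hasP; exists (nth 0 s q); last by rewrite /P hsq leqnn andbT; lia.
    have -> : nth 0 s q = nth 0 (drop p.+2 s) (q - p.+2) by rewrite nth_drop; congr nth; lia.
    by apply: mem_nth; rewrite size_drop ltn_sub2r //; apply: leq_ltn_trans lp1q hq.
  by rewrite /= h1 h2; lia.
have : count P s = count (preim f P) (enum F) + count (preim f P) (enum G).
  by rewrite /s /merged_labels (permP (permEl (perm_sort _ _))) count_cat !count_map.
have HP : forall x y, preim f P x -> preim f P y -> x != y -> e x y.
  by move=> x y /andP[? ?] /andP[? ?] nxy; apply: (clique U euv luv) => //; apply/andP.
have := count_le1 iF HP; have := count_le1 iG HP; lia.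
Qed.

Lemma odd_part_pos s n : n \in odd_part s -> exists2 i, (i < size s) && ~~ odd i & nth 0 s i = n.
Proof.
case/mapP => i; rewrite mem_filter mem_iota add0n => /andP[h1 /andP[_ h2]] ->.
by exists i => //; rewrite h2 h1.
Qed.

Lemma even_part_pos s n : n \in even_part s -> exists2 i, (i < size s) && odd i & nth 0 s i = n.
Proof.
case/mapP => i; rewrite mem_filter mem_iota add0n => /andP[h1 /andP[_ h2]] ->.
by exists i => //; rewrite h2 h1.
Qed.

Lemma sortable_of_umbrella : umbrella -> sortable_wrt e f.
Proof.
move=> U F G iF iG.
have key : forall (b : bool) (S : {set V}),
   (forall x, x \in S -> exists2 i, (i < size (merged_labels f F G)) && (odd i == b)
                        & nth 0 (merged_labels f F G) i = f x) -> independent e S.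
  move=> b S HS; apply: indepI => x y xS yS.
  have [->|nxy] := eqVneq x y; first by rewrite e_irr.
  have nf : f x != f y by apply: contra nxy => /eqP /f_inj ->.
  wlog lxy : x y xS yS nxy nf / f x < f y.
    move=> W; move: (nf); rewrite neq_ltn => /orP[h|h]; first exact: W xS yS nxy nf h.
    by rewrite e_sym; apply: W yS xS _ _ h; rewrite eq_sym.
  have [i /andP[hi ei] hni] := HS x xS; have [j /andP[hj ej] hnj] := HS y yS.
  apply: (merge_ok U iF iG hi hj _ hni hnj lxy).
  by rewrite (eqP ei) (eqP ej).
split.
- apply: (key false) => x; rewrite inE => /odd_part_pos [i /andP[h1 h2] h3].
  by exists i => //; rewrite h1 /=; case: (odd i) h2.
- apply: (key true) => x; rewrite inE => /even_part_pos [i /andP[h1 h2] h3].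
  by exists i => //; rewrite h1 /=; case: (odd i) h2.
Qed.


Lemma enum2 (a b : V) : a != b -> perm_eq (enum [set a; b]) [:: a; b].
Proof.
move=> nab; apply: uniq_perm; first exact: enum_uniq.
  by rewrite /= inE nab.
by move=> w; rewrite mem_enum !inE.
Qed.

Lemma sorted3 s a b c : a < b -> b < c -> perm_eq s [:: a; b; c] -> sort leq s = [:: a; b; c].
Proof.
move=> lab lbc ps; apply: (sorted_eq leq_trans anti_leq).
- exact: (sort_sorted leq_total).
- by rewrite /= (ltnW lab) (ltnW lbc).
- by rewrite perm_sort.
Qed.

Lemma umbrella_of_sortable : sortable_wrt e f -> umbrella.
Proof.
move=> S x y z lxy lyz exz.
have nxy : x != y by apply/eqP => E; move: lxy; rewrite E ltnn.
have nyz : y != z by apply/eqP => E; move: lyz; rewrite E ltnn.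
have nxz : x != z by apply/eqP => E; move: (ltn_trans lxy lyz); rewrite E ltnn.
have key : forall F G, independent e F -> independent e G ->
    perm_eq (map f (enum F) ++ map f (enum G)) [:: f x; f y; f z] -> False.
  move=> F G iF iG pe.
  have M : merged_labels f F G = [:: f x; f y; f z] by apply: sorted3.
  have [i1 _] := S F G iF iG.
  have xin : x \in sort1 f F G by rewrite inE M /odd_part /= inE eqxx.
  have zin : z \in sort1 f F G by rewrite inE M /odd_part /= !inE eqxx orbT.
  by have := indepP i1 xin zin; rewrite exz.
have i2 : forall a b, a != b -> ~~ e a b -> independent e [set a; b].
  move=> a b nab neab; apply: indepI => u v /set2P hu /set2P hv.
  by case: hu => ->; case: hv => ->; rewrite ?e_irr // e_sym.
have i1 : forall a, independent e [set a].
  by move=> a; apply: indepI => u v /set1P-> /set1P->; rewrite e_irr.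
apply/andP; split; apply/negPn/negP => ne.
- apply: (key [set x; y] [set z] (i2 _ _ nxy ne) (i1 z)).
  rewrite enum_set1 (_ : [:: f x; f y; f z] = [:: f x; f y] ++ [:: f z]) // perm_cat2r.
  exact: (perm_map f (enum2 nxy)).
- apply: (key [set y; z] [set x] (i2 _ _ nyz ne) (i1 x)).
  rewrite enum_set1 perm_catC (_ : [:: f x; f y; f z] = [:: f x] ++ [:: f y; f z]) // perm_cat2l.
  exact: (perm_map f (enum2 nyz)).
Qed.

End Comb.
From Stdlib Require Import Rdefinitions Raxioms RIneq Lra.
Definition umbrella' (V : finType) (e : rel V) (f : V -> nat) :=
  forall x y z, f x < f y -> f y < f z -> e x z -> e x y && e y z.

Lemma INR_leb a b : Rle (INR a) (INR b) <-> a <= b.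
Proof. split; [by move/INR_le/leP | by move/leP/le_INR]. Qed.

Section ToInterval.
Variables (V : finType) (e : rel V) (f : V -> nat).
Hypotheses (e_sym : symmetric e) (e_irr : irreflexive e) (f_inj : injective f)
  (U : umbrella' e f).

Definition N := (\max_(v : V) f v).+1.
Lemma hN v : f v < N.
Proof. by rewrite ltnS; apply: (leq_bigmax (F := f)). Qed.

Definition Rv v := \max_(w | (w == v) || (e v w && (f v <= f w))) f w.

Lemma Rge v : f v <= Rv v.
Proof. by apply: (leq_bigmax_cond (F := f)); rewrite eqxx. Qed.

Lemma Rle' v w : e v w -> f v <= f w -> f w <= Rv v.
Proof. by move=> h1 h2; apply: (leq_bigmax_cond (F := f)); rewrite h1 h2 orbT. Qed.

Lemma Rex v : exists2 w, (w == v) || (e v w && (f v <= f w)) & Rv v = f w.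
Proof.
have [|w hw E] := @eq_bigmax_cond _ [pred w | (w == v) || (e v w && (f v <= f w))] f.
  by apply/card_gt0P; exists v; rewrite inE /= eqxx.
by exists w; [exact: hw | exact: E].
Qed.

Lemma Rmono u v : f u < f v -> Rv u <= Rv v.
Proof.
move=> luv; have [w /orP[/eqP ->|/andP[euw luw]] ->] := Rex u.
  by apply: leq_trans (Rge v); apply: ltnW.
have [lwv|lvw] := leqP (f w) (f v); first by apply: leq_trans (Rge v).
have /andP[_ evw] := U luv lvw euw.
by apply: Rle' => //; apply: ltnW.
Qed.

Lemma Radj u v : f u < f v -> e u v = (f v <= Rv u).
Proof.
move=> luv; apply/idP/idP => [euv|]; first by apply: Rle' => //; apply: ltnW.
have [w /orP[/eqP ->|/andP[euw luw]] ->] := Rex u; first by rewrite leqNgt luv.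
move=> lvw; have [E|nE] := eqVneq (f v) (f w).
  by have -> : v = w by apply: f_inj.
have lvw' : f v < f w by rewrite ltn_neqAle nE lvw.
by case/andP: (U luv lvw' euw).
Qed.

Lemma to_interval : proper_interval_graph e.
Proof.
exists (fun v => INR (N * f v)), (fun v => INR (N * Rv v + f v)).
split; [|split].
- move=> v; apply/INR_leb; have := Rge v; nia.
- move=> u v nuv [/INR_leb h1 [/INR_leb h2 _]].
  have nf : f u != f v by apply/eqP => /f_inj.
  have := hN u; have := hN v.
  move: nf; rewrite neq_ltn => /orP[h|h].
  + nia.
  + have := Rmono h; nia.
- have key : forall u v, f u < f v ->
     (e u v <-> (Rle (INR (N * f u)) (INR (N * Rv v + f v)) /\
                 Rle (INR (N * f v)) (INR (N * Rv u + f u)))).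
    move=> u v luv; rewrite !INR_leb Radj //.
    have := hN u; have := hN v; have := Rge v.
    split; [move=> h; split; nia | move=> [_ h]; nia].
  move=> u v nuv.
  have nf : f u != f v by apply/eqP => /f_inj.
  move: nf; rewrite neq_ltn => /orP[h|h]; first exact: key.
  rewrite e_sym key //; tauto.
Qed.
End ToInterval.

Section FromInterval.
Variables (V : finType) (e : rel V) (l r : V -> R).
Hypotheses (e_sym : symmetric e) (e_irr : irreflexive e)
  (hlr : forall v, Rle (l v) (r v))
  (hprop : forall u v : V, u <> v ->
        ~ (Rle (l v) (l u) /\ Rle (r u) (r v) /\ (l u <> l v \/ r u <> r v)))
  (hadj : forall u v : V, u <> v -> (e u v <-> (Rle (l u) (r v) /\ Rle (l v) (r u)))).

Definition rlt (a b : R) : bool := if Rlt_dec a b then true else false.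
Lemma rltP a b : reflect (Rlt a b) (rlt a b).
Proof. by rewrite /rlt; case: Rlt_dec => h; constructor. Qed.

Definition klt (w v : V) : bool :=
  rlt (l w) (l v) || (~~ rlt (l v) (l w) && (enum_rank w < enum_rank v)).

Lemma klt_trans a b c : klt a b -> klt b c -> klt a c.
Proof.
rewrite /klt => /orP[/rltP h1|/andP[/rltP h1 h1']] /orP[/rltP h2|/andP[/rltP h2 h2']].
- by apply/orP; left; apply/rltP; lra.
- by apply/orP; left; apply/rltP; lra.
- by apply/orP; left; apply/rltP; lra.
- apply/orP; right; apply/andP; split; first by apply/rltP; lra.
  exact: ltn_trans h1' h2'.
Qed.

Lemma klt_irr a : ~~ klt a a.
Proof. by rewrite /klt ltnn andbF orbF; apply/rltP; lra. Qed.

Lemma klt_total a b : a != b -> klt a b || klt b a.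
Proof.
move=> nab; rewrite /klt.
case: (rltP (l a) (l b)) => //= hab; case: (rltP (l b) (l a)) => //= hba.
by rewrite -neq_ltn; apply: contra nab => /eqP E; apply/eqP; exact: enum_rank_inj (val_inj E).
Qed.

Definition fr v := #|[set w | klt w v]|.

Lemma klt_fr a b : klt a b -> fr a < fr b.
Proof.
move=> hab; apply: proper_card; apply/properP; split.
  by apply/subsetP => x; rewrite !inE => h; apply: klt_trans h hab.
by exists a; rewrite !inE // klt_irr.
Qed.

Lemma fr_inj : injective fr.
Proof.
move=> a b E; apply/eqP; apply/negPn/negP => nab.
by case/orP: (klt_total nab) => /klt_fr; rewrite E ltnn.
Qed.

Lemma fr_l a b : fr a < fr b -> Rle (l a) (l b).
Proof.
move=> h; apply: Rnot_lt_le => hba.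
have : klt b a by rewrite /klt; apply/orP; left; apply/rltP.
by move/klt_fr; rewrite ltnNge (ltnW h).
Qed.

Lemma fr_umbrella : umbrella' e fr.
Proof.
move=> x y z lxy lyz exz.
have nxy : x <> y by move=> E; move: lxy; rewrite E ltnn.
have nyz : y <> z by move=> E; move: lyz; rewrite E ltnn.
have nxz : x <> z by move=> E; move: (ltn_trans lxy lyz); rewrite E ltnn.
have h1 := fr_l lxy; have h2 := fr_l lyz.
have hr : Rle (r x) (r y).
  apply: Rnot_lt_le => hyx; apply: (hprop (nesym nxy)); split => //; split; [lra|right; lra].
have [a1 a2] := (hadj nxz).1 exz.
have := hlr x; have := hlr y; have := hlr z => z1 y1 x1.
apply/andP; split.
- by apply/(hadj nxy); split; lra.
- by apply/(hadj nyz); split; lra.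
Qed.
End FromInterval.

Theorem theorem1p8 (V : finType) (e : rel V)
    (e_sym : symmetric e) (e_irr : irreflexive e) :
  ind_complex_sortable e <-> proper_interval_graph e.
Proof.
split.
- case=> f [finj S].
  have U : umbrella e f by apply: umbrella_of_sortable; try assumption.
  by apply: (to_interval (f := f)); try assumption.
- case=> l [r [h1 [h2 h3]]].
  exists (fr l); split; first exact: fr_inj.
  apply: sortable_of_umbrella; try assumption; first exact: fr_inj.
  exact: fr_umbrella.
Qed.
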